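(* Let $L$ be either $\mathbf{IL}^-(\mathbf{J2}_{+})$ or $\mathbf{CL}$. For any modal formula $A$ the following are equivalent: (i) $L\vdash A$; (ii) $A$ is valid in all simplified $L$-frames; (iii) $A$ is valid in all finite simplified $L$-frames. In particular, $\mathbf{CL}$ has the finite model property with respect to simplified $\mathbf{CL}$-frames.
   Context: Modal formulas are built from propositional variables, $\top$, $\bot$ using $\to,\lor,\land$, unary $\Box$ and binary $\rhd$; $\lnot A:=A\to\bot$, $\Diamond A:=\lnot\Box\lnot A$. The logic $\mathbf{IL}^-$ has as axioms all tautologies, $\Box(A\to B)\to(\Box A\to\Box B)$, $\Box(\Box A\to A)\to\Box A$, $(A\rhd C)\land(B\rhd C)\to(A\lor B)\rhd C$, and $\Box\lnot A\leftrightarrow A\rhd\bot$; its rules are modus ponens, necessitation, from $A\to B$ infer $C\rhd A\to C\rhd B$, and from $A\to B$ infer $B\rhd C\to A\rhd C$. $\mathbf{IL}^-(\mathbf{J2}_{+})$ is $\mathbf{IL}^-$ plus the axiom scheme $\mathbf{J2}_{+}$: $A\rhd(B\lor C)\land B\rhd C\to A\rhd C$. The logic $\mathbf{CL}$ has axioms: all tautologies, $\Box(A\to B)\to(\Box A\to\Box B)$, $\Box(\Box A\to A)\to\Box A$, $\Box(A\to B)\to A\rhd B$, $(A\rhd B)\land(B\rhd C)\to A\rhd C$, $(A\rhd C)\land(B\rhd C)\to(A\lor B)\rhd C$, $A\rhd B\to(\Diamond A\to\Diamond B)$, with rules modus ponens and necessitation. A simplified frame is $(W,R,S)$ with $W$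 non-empty, $R$ a transitive, conversely well-founded binary relation on $W$, $S$ a binary relation on $W$; it is finite if $W$ is. Forcing: arbitrary on variables, Boolean clauses as usual, $x\Vdash\Box A$ iff $y\Vdash A$ for all $y$ with $xRy$, and $x\Vdash A\rhd B$ iff for every $y$ with $xRy$ and $y\Vdash A$ there is $z$ with $xRz$, $ySz$, $z\Vdash B$. $A$ is valid in a frame if it is forced at every point under every forcing relation. A simplified $\mathbf{IL}^-(\mathbf{J2}_{+})$-frame is a simplified frame with $S$ transitive; a simplified $\mathbf{CL}$-frame is a simplified frame with $S$ reflexive and transitive. *)

(* Defs.v *)
From Stdlib Require Import List.

Inductive formula : Type :=
| Var : nat -> formula
| Top : formula
| Bot : formula
| Imp : formula -> formula -> formula
| Or  : formula -> formula -> formula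
| And : formula -> formula -> formula
| Box : formula -> formula
| Rhd : formula -> formula -> formula.

Definition Neg (A : formula) : formula := Imp A Bot.
Definition Dia (A : formula) : formula := Neg (Box (Neg A)).
Definition Iff (A B : formula) : formula := And (Imp A B) (Imp B A).

(* Propositional (Boolean) evaluation, treating variables, boxed formulas
   and rhd-formulas as propositional atoms. *)
Fixpoint tval (v : formula -> bool) (A : formula) : bool :=
  match A with
  | Var _ => v A
  | Top => true
  | Bot => false
  | Imp B C => orb (negb (tval v B)) (tval v C)
  | Or B C => orb (tval v B) (tval v C)
  | And B C => andb (tval v B) (tval v C)
  | Box _ => v A
  | Rhd _ _ => v A
  end.

Definition tautology (A : formula) : Prop := forall v, tval v A = true.

Inductive prov_ILmJ2p : formula -> Prop :=
| ilj_taut A : tautology A -> prov_ILmJ2p A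
| ilj_K A B : prov_ILmJ2p (Imp (Box (Imp A B)) (Imp (Box A) (Box B)))
| ilj_L A : prov_ILmJ2p (Imp (Box (Imp (Box A) A)) (Box A))
| ilj_J3 A B C : prov_ILmJ2p (Imp (And (Rhd A C) (Rhd B C)) (Rhd (Or A B) C))
| ilj_J6 A : prov_ILmJ2p (Iff (Box (Neg A)) (Rhd A Bot))
| ilj_J2p A B C : prov_ILmJ2p (Imp (And (Rhd A (Or B C)) (Rhd B C)) (Rhd A C))
| ilj_MP A B : prov_ILmJ2p (Imp A B) -> prov_ILmJ2p A -> prov_ILmJ2p B
| ilj_Nec A : prov_ILmJ2p A -> prov_ILmJ2p (Box A)
| ilj_R1 A B C : prov_ILmJ2p (Imp A B) -> prov_ILmJ2p (Imp (Rhd C A) (Rhd C B))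
| ilj_R2 A B C : prov_ILmJ2p (Imp A B) -> prov_ILmJ2p (Imp (Rhd B C) (Rhd A C)).

Inductive prov_CL : formula -> Prop :=
| cl_taut A : tautology A -> prov_CL A
| cl_K A B : prov_CL (Imp (Box (Imp A B)) (Imp (Box A) (Box B)))
| cl_L A : prov_CL (Imp (Box (Imp (Box A) A)) (Box A))
| cl_J1 A B : prov_CL (Imp (Box (Imp A B)) (Rhd A B))
| cl_J2 A B C : prov_CL (Imp (And (Rhd A B) (Rhd B C)) (Rhd A C))
| cl_J3 A B C : prov_CL (Imp (And (Rhd A C) (Rhd B C)) (Rhd (Or A B) C))
| cl_J4 A B : prov_CL (Imp (Rhd A B) (Imp (Dia A) (Dia B)))
| cl_MP A B : prov_CL (Imp A B) -> prov_CL A -> prov_CL B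
| cl_Nec A : prov_CL A -> prov_CL (Box A).

Inductive logic : Type := ILmJ2p | CL.

Definition prov (L : logic) (A : formula) : Prop :=
  match L with
  | ILmJ2p => prov_ILmJ2p A
  | CL => prov_CL A
  end.

Record frame : Type := Frame {
  W : Type;
  R : W -> W -> Prop;
  S : W -> W -> Prop
}.

Definition transitive {X : Type} (r : X -> X -> Prop) : Prop :=
  forall x y z, r x y -> r y z -> r x z.
Definition reflexive {X : Type} (r : X -> X -> Prop) : Prop := forall x, r x x.

Definition simplified_frame (F : frame) : Prop :=
  inhabited (W F) /\ transitive (R F) /\ well_founded (fun x y => R F y x).

Definition finite_frame (F : frame) : Prop :=
  exists l : list (W F), forall w, In w l.

Definition L_frame (L : logic) (F : frame) : Prop :=
  simplified_frame F /\
  match L with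
  | ILmJ2p => transitive (S F)
  | CL => reflexive (S F) /\ transitive (S F)
  end.

Fixpoint forces (F : frame) (V : nat -> W F -> Prop) (x : W F) (A : formula) : Prop :=
  match A with
  | Var p => V p x
  | Top => True
  | Bot => False
  | Imp B C => forces F V x B -> forces F V x C
  | Or B C => forces F V x B \/ forces F V x C
  | And B C => forces F V x B /\ forces F V x C
  | Box B => forall y, R F x y -> forces F V y B
  | Rhd B C => forall y, R F x y -> forces F V y B ->
                 exists z, R F x z /\ S F y z /\ forces F V z C
  end.

Definition valid_in (F : frame) (A : formula) : Prop :=
  forall (V : nat -> W F -> Prop) (x : W F), forces F V x A.

(* Main.v *)
Require Import Defs.
From Stdlib Require Import Bool List Classical ClassicalEpsilon ProofIrrelevance Lia Arith Wf_nat.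
Import ListNotations.

Ltac taut_tac :=
  let v := fresh "v" in intro v; simpl;
  repeat (match goal with
          | |- context [tval v ?X] => destruct (tval v X)
          | |- context [v ?X] => destruct (v X)
          end; simpl); reflexivity.

Section API.
Variable L : logic.
Notation Pv := (prov L).

Lemma ax_taut A : tautology A -> Pv A.
Proof. destruct L; simpl; constructor; auto. Qed.
Lemma ax_mp A B : Pv (Imp A B) -> Pv A -> Pv B.
Proof. destruct L; simpl; eauto using ilj_MP, cl_MP. Qed.
Lemma ax_nec A : Pv A -> Pv (Box A).
Proof. destruct L; simpl; eauto using ilj_Nec, cl_Nec. Qed.
Lemma ax_K A B : Pv (Imp (Box (Imp A B)) (Imp (Box A) (Box B))).
Proof. destruct L; simpl; [apply ilj_K|apply cl_K]. Qed.
Lemma ax_Lob A : Pv (Imp (Box (Imp (Box A) A)) (Box A)).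
Proof. destruct L; simpl; [apply ilj_L|apply cl_L]. Qed.
Lemma ax_J3 A B C : Pv (Imp (And (Rhd A C) (Rhd B C)) (Rhd (Or A B) C)).
Proof. destruct L; simpl; [apply ilj_J3|apply cl_J3]. Qed.

Lemma taut_mp1 X Y : tautology (Imp X Y) -> Pv X -> Pv Y.
Proof. intros T H. eapply ax_mp; [apply ax_taut, T| exact H]. Qed.
Lemma taut_mp2 X Y Z : tautology (Imp X (Imp Y Z)) -> Pv X -> Pv Y -> Pv Z.
Proof. intros T H1 H2. eapply ax_mp; [eapply ax_mp; [apply ax_taut, T| exact H1]| exact H2]. Qed.
Lemma taut_mp3 X Y Z U : tautology (Imp X (Imp Y (Imp Z U))) -> Pv X -> Pv Y -> Pv Z -> Pv U.
Proof. intros T H1 H2 H3. eapply ax_mp; [eapply taut_mp2; eauto| exact H3]. Qed.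

Lemma c_taut1 G X Y : tautology (Imp X Y) -> Pv (Imp G X) -> Pv (Imp G Y).
Proof. intros T H. eapply taut_mp1; [|exact H]. intro v. specialize (T v). simpl in *.
  destruct (tval v G), (tval v X), (tval v Y); auto. Qed.
Lemma c_taut2 G X Y Z : tautology (Imp X (Imp Y Z)) -> Pv (Imp G X) -> Pv (Imp G Y) -> Pv (Imp G Z).
Proof. intros T H1 H2. eapply taut_mp2; [|exact H1|exact H2]. intro v. specialize (T v). simpl in *.
  destruct (tval v G), (tval v X), (tval v Y), (tval v Z); auto. Qed.
Lemma c_thm G X : Pv X -> Pv (Imp G X).
Proof. intro H. eapply taut_mp1; [|exact H]. taut_tac. Qed.
Lemma c_mp G X Y : Pv (Imp G (Imp X Y)) -> Pv (Imp G X) -> Pv (Imp G Y).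
Proof. intros H1 H2. apply (c_taut2 G (Imp X Y) X Y); auto. taut_tac. Qed.

Lemma box_mono X Y : Pv (Imp X Y) -> Pv (Imp (Box X) (Box Y)).
Proof. intro H. eapply ax_mp; [apply ax_K| apply ax_nec, H]. Qed.
Lemma box_taut X Y : tautology (Imp X Y) -> Pv (Imp (Box X) (Box Y)).
Proof. intro T. apply box_mono, ax_taut, T. Qed.
Lemma c_box_taut G X Y : tautology (Imp X Y) -> Pv (Imp G (Box X)) -> Pv (Imp G (Box Y)).
Proof. intros T H. eapply c_mp; [apply c_thm, box_taut, T| exact H]. Qed.
Lemma box_taut2 X Y Z : tautology (Imp X (Imp Y Z)) -> Pv (Imp (Box X) (Imp (Box Y) (Box Z))).
Proof. intro T. assert (H: Pv (Imp (Box X) (Box (Imp Y Z)))) by (apply box_taut, T).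
  eapply taut_mp2; [| exact H | apply (ax_K Y Z)]. taut_tac. Qed.
Lemma c_box_taut2 G X Y Z : tautology (Imp X (Imp Y Z)) -> Pv (Imp G (Box X)) -> Pv (Imp G (Box Y)) -> Pv (Imp G (Box Z)).
Proof. intros T H1 H2. eapply c_mp; [eapply c_mp; [apply c_thm, box_taut2, T| exact H1]| exact H2]. Qed.

Lemma ax_4 C : Pv (Imp (Box C) (Box (Box C))).
Proof.
  set (B := And C (Box C)).
  assert (H1: Pv (Imp (Box B) (Box C))) by (apply box_taut; unfold B; taut_tac).
  assert (H2: Pv (Imp C (Imp (Box B) B))).
  { eapply taut_mp1; [| exact H1]. unfold B; taut_tac. }
  assert (H3: Pv (Imp (Box C) (Box (Imp (Box B) B)))) by (apply box_mono; exact H2).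
  assert (H4: Pv (Imp (Box C) (Box B))).
  { clearbody B. refine (taut_mp2 _ _ (Imp (Box C) (Box B)) _ H3 (ax_Lob B)); taut_tac. }
  assert (H5: Pv (Imp (Box B) (Box (Box C)))) by (apply box_taut; unfold B; taut_tac).
  clearbody B. refine (taut_mp2 _ _ _ _ H4 H5); taut_tac.
Qed.

Lemma lob_dia P : Pv (Imp (Dia P) (Dia (And P (Box (Neg P))))).
Proof.
  assert (H: Pv (Imp (Box (Neg (And P (Box (Neg P))))) (Box (Imp (Box (Neg P)) (Neg P))))).
  { apply box_taut. taut_tac. }
  refine (taut_mp2 _ _ _ _ H (ax_Lob (Neg P))); unfold Dia, Neg; taut_tac.
Qed.

End API.
Arguments ax_taut {L}.
Arguments ax_mp {L}.
Arguments ax_nec {L}.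
Arguments ax_K {L}.
Arguments ax_Lob {L}.
Arguments ax_J3 {L}.
Arguments taut_mp1 {L}.
Arguments taut_mp2 {L}.
Arguments taut_mp3 {L}.
Arguments c_taut1 {L}.
Arguments c_taut2 {L}.
Arguments c_thm {L}.
Arguments c_mp {L}.
Arguments box_mono {L}.
Arguments box_taut {L}.
Arguments c_box_taut {L}.
Arguments box_taut2 {L}.
Arguments c_box_taut2 {L}.
Arguments ax_4 {L}.
Arguments lob_dia {L}.
Ltac tt := first [taut_tac | (apply ax_taut; taut_tac)].
Section API2.
Variable L : logic.
Notation Pv := (prov L).

Lemma ax_R1 A B C : Pv (Imp A B) -> Pv (Imp (Rhd C A) (Rhd C B)).
Proof.
  destruct L; simpl; intro H.
  - apply ilj_R1; exact H.
  - assert (H1: prov CL (Rhd A B)) by (eapply cl_MP; [apply cl_J1| apply cl_Nec, H]).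
    refine (@taut_mp2 CL _ _ _ _ H1 (cl_J2 C A B)); tt.
Qed.

Lemma ax_R2 A B C : Pv (Imp A B) -> Pv (Imp (Rhd B C) (Rhd A C)).
Proof.
  destruct L; simpl; intro H.
  - apply ilj_R2; exact H.
  - assert (H1: prov CL (Rhd A B)) by (eapply cl_MP; [apply cl_J1| apply cl_Nec, H]).
    refine (@taut_mp2 CL _ _ _ _ H1 (cl_J2 A B C)); tt.
Qed.

Lemma ax_J2p A B C : Pv (Imp (And (Rhd A (Or B C)) (Rhd B C)) (Rhd A C)).
Proof.
  destruct L; simpl.
  - apply ilj_J2p.
  - assert (H1: prov CL (Rhd C C)) by (eapply cl_MP; [apply cl_J1| apply cl_Nec; apply cl_taut; tt]).
    pose proof (cl_J3 B C C) as H2. pose proof (cl_J2 A (Or B C) C) as H3.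
    refine (@taut_mp3 CL _ _ _ _ _ H1 H2 H3); tt.
Qed.

Lemma ax_J6a A : Pv (Imp (Box (Neg A)) (Rhd A Bot)).
Proof.
  destruct L; simpl.
  - refine (@taut_mp1 ILmJ2p _ _ _ (ilj_J6 A)); unfold Iff; tt.
  - apply cl_J1.
Qed.

Lemma ax_J6b A : Pv (Imp (Rhd A Bot) (Box (Neg A))).
Proof.
  destruct L; simpl.
  - refine (@taut_mp1 ILmJ2p _ _ _ (ilj_J6 A)); unfold Iff; tt.
  - assert (H1: prov CL (Box (Neg Bot))) by (apply cl_Nec; apply cl_taut; tt).
    refine (@taut_mp2 CL _ _ _ _ H1 (cl_J4 A Bot)); unfold Dia, Neg; tt.
Qed.

Lemma bot_rhd X : Pv (Rhd Bot X).
Proof.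
  assert (H1: Pv (Box (Neg Bot))) by (apply ax_nec, ax_taut; tt).
  assert (H2: Pv (Rhd Bot Bot)) by (eapply ax_mp; [apply ax_J6a| exact H1]).
  eapply ax_mp; [apply ax_R1| exact H2]. tt.
Qed.

Lemma cl_refl : L = CL -> forall B, Pv (Rhd B B).
Proof. intros -> B. simpl. eapply cl_MP; [apply cl_J1| apply cl_Nec; apply cl_taut; tt]. Qed.

Lemma c_J3 G A B C : Pv (Imp G (Rhd A C)) -> Pv (Imp G (Rhd B C)) -> Pv (Imp G (Rhd (Or A B) C)).
Proof. intros H1 H2. refine (c_mp _ _ _ (c_thm _ _ (ax_J3 A B C)) _).
  refine (c_taut2 _ _ _ _ _ H1 H2). tt. Qed.

Lemma c_R1 G A B C : Pv (Imp A B) -> Pv (Imp G (Rhd C A)) -> Pv (Imp G (Rhd C B)).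
Proof. intros H1 H2. exact (c_mp _ _ _ (c_thm _ _ (ax_R1 _ _ C H1)) H2). Qed.
Lemma c_R2 G A B C : Pv (Imp A B) -> Pv (Imp G (Rhd B C)) -> Pv (Imp G (Rhd A C)).
Proof. intros H1 H2. exact (c_mp _ _ _ (c_thm _ _ (ax_R2 _ _ C H1)) H2). Qed.
Lemma c_J2p G A B C : Pv (Imp G (Rhd A (Or B C))) -> Pv (Imp G (Rhd B C)) -> Pv (Imp G (Rhd A C)).
Proof. intros H1 H2. refine (c_mp _ _ _ (c_thm _ _ (ax_J2p A B C)) _).
  refine (c_taut2 _ _ _ _ _ H1 H2). tt. Qed.
Lemma c_J6a G A : Pv (Imp G (Box (Neg A))) -> Pv (Imp G (Rhd A Bot)).
Proof. intro H. exact (c_mp _ _ _ (c_thm _ _ (ax_J6a A)) H). Qed.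
Lemma c_J6b G A : Pv (Imp G (Rhd A Bot)) -> Pv (Imp G (Box (Neg A))).
Proof. intro H. exact (c_mp _ _ _ (c_thm _ _ (ax_J6b A)) H). Qed.

Lemma c_boxmono G A B C : Pv (Imp G (Rhd A B)) -> Pv (Imp G (Box (Imp B C))) -> Pv (Imp G (Rhd A C)).
Proof.
  intros H1 H2.
  assert (H3: Pv (Imp G (Box (Neg (And B (Neg C)))))) by (refine (c_box_taut _ _ _ _ H2); tt).
  assert (H4: Pv (Imp G (Rhd (And B (Neg C)) Bot))) by (apply c_J6a; exact H3).
  assert (H5: Pv (Imp G (Rhd (And B (Neg C)) C))) by (refine (c_R1 _ _ _ _ _ H4); tt).
  assert (H6: Pv (Imp G (Rhd A (Or (And B (Neg C)) C)))) by (refine (c_R1 _ _ _ _ _ H1); tt).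
  exact (c_J2p _ _ _ _ H6 H5).
Qed.

Lemma c_boxante G A B C : Pv (Imp G (Box (Imp A C))) -> Pv (Imp G (Rhd C B)) -> Pv (Imp G (Rhd A B)).
Proof.
  intros H1 H2.
  assert (H3: Pv (Imp G (Box (Neg (And A (Neg C)))))) by (refine (c_box_taut _ _ _ _ H1); tt).
  assert (H4: Pv (Imp G (Rhd (And A (Neg C)) Bot))) by (apply c_J6a; exact H3).
  assert (H5: Pv (Imp G (Rhd (And A (Neg C)) B))) by (refine (c_R1 _ _ _ _ _ H4); tt).
  assert (H6: Pv (Imp G (Rhd (And A C) B))) by (refine (c_R2 _ _ _ _ _ H2); tt).
  assert (H7: Pv (Imp G (Rhd (Or (And A C) (And A (Neg C))) B))) by (apply c_J3; auto).
  refine (c_R2 _ _ _ _ _ H7); tt.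
Qed.

End API2.
Arguments ax_R1 {L}.
Arguments ax_R2 {L}.
Arguments ax_J2p {L}.
Arguments ax_J6a {L}.
Arguments ax_J6b {L}.
Arguments bot_rhd {L}.
Arguments cl_refl {L}.
Arguments c_J3 {L}.
Arguments c_R1 {L}.
Arguments c_R2 {L}.
Arguments c_J2p {L}.
Arguments c_J6a {L}.
Arguments c_J6b {L}.
Arguments c_boxmono {L}.
Arguments c_boxante {L}.
Section Sound.
Variable F : frame.
Variable V : nat -> W F -> Prop.

Lemma forces_tval x :
  forall B, tval (fun B => if excluded_middle_informative (forces F V x B) then true else false) B = true
            <-> forces F V x B.
Proof.
  induction B; simpl.
  - destruct (excluded_middle_informative _); simpl; intuition congruence.
  - intuition.
  - intuition congruence.
  - rewrite Bool.orb_true_iff, Bool.negb_true_iff, <- IHB2.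
    destruct (tval _ B1) eqn:E1; [|].
    + assert (forces F V x B1) by (apply IHB1; auto). intuition congruence.
    + assert (~ forces F V x B1) by (rewrite <- IHB1; congruence). intuition.
  - rewrite Bool.orb_true_iff, IHB1, IHB2. tauto.
  - rewrite Bool.andb_true_iff, IHB1, IHB2. tauto.
  - destruct (excluded_middle_informative _); simpl; intuition congruence.
  - destruct (excluded_middle_informative _); simpl; intuition congruence.
Qed.

Lemma taut_forces A x : tautology A -> forces F V x A.
Proof. intro T. apply forces_tval, T. Qed.
End Sound.

Lemma soundness L A : prov L A -> forall F, L_frame L F -> valid_in F A.
Proof.
  intros HP F [[Hinh [HRt HRwf]] HS] V.
  assert (Lob: forall x B, forces F V x (Imp (Box (Imp (Box B) B)) (Box B))).
  { intros x B H. simpl in H |- *.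
    intro y. induction y as [y IH] using (well_founded_induction HRwf).
    intro Hxy. apply H; auto. intros z Hyz. apply IH; eauto. }
  assert (J3: forall x A B C, forces F V x (Imp (And (Rhd A C) (Rhd B C)) (Rhd (Or A B) C))).
  { intros x A0 B C [H1 H2] y Hy [Ha|Hb]; eauto. }
  assert (K: forall x A B, forces F V x (Imp (Box (Imp A B)) (Imp (Box A) (Box B)))).
  { intros x A0 B H1 H2 y Hy. simpl in *. eauto. }
  destruct L; simpl in HP; induction HP; intro x.
  - apply taut_forces; auto.
  - apply K.
  - apply Lob.
  - apply (J3 x).
  - simpl. split.
    + intros H y Hy Ha. exfalso. exact (H y Hy Ha).
    + intros H y Hy Ha. destruct (H y Hy Ha) as [z [_ [_ []]]].
  - simpl. intros [H1 H2] y Hy Ha. destruct (H1 y Hy Ha) as [z [Hz [Hyz [Hb|Hc]]]].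
    + destruct (H2 z Hz Hb) as [w [Hw [Hzw Hc]]]. exists w. repeat split; auto. eapply HS; eauto.
    + exists z; auto.
  - apply (IHHP1 x). apply IHHP2.
  - simpl. intros y Hy. apply IHHP.
  - simpl. intros H y Hy Ha. destruct (H y Hy Ha) as [z [Hz [Hyz Hb]]]. exists z. repeat split; auto. apply (IHHP z), Hb.
  - simpl. intros H y Hy Ha. apply (H y Hy). apply (IHHP y), Ha.
  - apply taut_forces; auto.
  - apply K.
  - apply Lob.
  - simpl. intros H y Hy Ha. exists y. split; [exact Hy| split; [apply (proj1 HS) | apply (H y Hy), Ha]].
  - simpl. intros [H1 H2] y Hy Ha. destruct (H1 y Hy Ha) as [z [Hz [Hyz Hb]]].
    destruct (H2 z Hz Hb) as [w [Hw [Hzw Hc]]]. exists w. repeat split; auto. destruct HS as [_ HS]. eapply HS; eauto.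
  - apply (J3 x).
  - simpl. intros H Hda Hbb. apply Hda. intros y Hy Ha. destruct (H y Hy Ha) as [z [Hz [_ Hb]]]. exact (Hbb z Hz Hb).
  - apply (IHHP1 x). apply IHHP2.
  - simpl. intros y Hy. apply IHHP.
Qed.
Definition fdec : forall x y : formula, {x = y} + {x <> y}.
Proof. decide equality; apply Nat.eq_dec. Defined.

Definition lit := (formula * bool)%type.
Definition ldec : forall x y : lit, {x = y} + {x <> y}.
Proof. decide equality; [apply Bool.bool_dec | apply fdec]. Defined.

Definition litf (x : lit) : formula := if snd x then fst x else Neg (fst x).
Fixpoint conjL (l : list formula) : formula :=
  match l with [] => Top | x :: l' => And x (conjL l') end.
Fixpoint disj (l : list formula) : formula :=
  match l with [] => Bot | x :: l' => Or x (disj l') end.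
Definition conj (l : list lit) : formula := conjL (map litf l).
Definition negl (D : formula) : lit := (D, false).

Fixpoint subseqs {A} (l : list A) : list (list A) :=
  match l with [] => [[]] | x :: l' => map (cons x) (subseqs l') ++ subseqs l' end.

Lemma subseqs_nil {A} (l : list A) : In [] (subseqs l).
Proof. induction l; simpl; auto. apply in_or_app; auto. Qed.
Lemma subseqs_incl {A} (l s : list A) : In s (subseqs l) -> incl s l.
Proof.
  revert s; induction l; simpl; intros s H.
  - destruct H as [<-|[]]. intros x [].
  - apply in_app_or in H. destruct H as [H|H].
    + apply in_map_iff in H. destruct H as [s' [<- H]]. intros x [->|Hx]; [left; auto| right; eapply IHl; eauto].
    + intros x Hx; right; eapply IHl; eauto.
Qed.
Lemma filter_subseqs {A} (f : A -> bool) l : In (filter f l) (subseqs l).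
Proof.
  induction l; simpl; auto. destruct (f a); apply in_or_app; [left; apply in_map; auto| right; auto].
Qed.
Lemma subseqs_single {A} (l : list A) x : In x l -> In [x] (subseqs l).
Proof.
  induction l; simpl; [intros []|]. intros [->|H]; apply in_or_app.
  - left. apply in_map. apply subseqs_nil.
  - right. auto.
Qed.
Lemma subseqs_cons {A} (l s : list A) x : In s (subseqs l) -> In (x :: s) (subseqs (x :: l)).
Proof. intro H. simpl. apply in_or_app. left. apply in_map. auto. Qed.
Lemma subseqs_skip {A} (l s : list A) x : In s (subseqs l) -> In s (subseqs (x :: l)).
Proof. intro H. simpl. apply in_or_app. right. auto. Qed.

Lemma tval_conjL v l : tval v (conjL l) = forallb (tval v) l.
Proof. induction l; simpl; auto. rewrite IHl; auto. Qed.
Lemma tval_disj v l : tval v (disj l) = existsb (tval v) l.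
Proof. induction l; simpl; auto. rewrite IHl; auto. Qed.
Lemma tval_conj v l : tval v (conj l) = forallb (fun x => tval v (litf x)) l.
Proof. unfold conj. rewrite tval_conjL. induction l; simpl; auto. rewrite IHl; auto. Qed.
Lemma tval_conj_app v l1 l2 : tval v (conj (l1 ++ l2)) = tval v (conj l1) && tval v (conj l2).
Proof. rewrite !tval_conj, forallb_app; auto. Qed.
Lemma tval_conj_negl v l : tval v (conj (map negl l)) = negb (tval v (disj l)).
Proof. rewrite tval_conj, tval_disj. induction l; simpl; auto. rewrite IHl.
  unfold litf, negl; simpl. destruct (tval v a); simpl; auto. Qed.
Lemma tval_shape v b0 X Y :
  tval v (conj (b0 :: map negl X ++ map negl Y)) =
  tval v (litf b0) && negb (tval v (disj X)) && negb (tval v (disj Y)).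
Proof.
  change (b0 :: map negl X ++ map negl Y) with ([b0] ++ (map negl X ++ map negl Y)).
  rewrite !tval_conj_app, !tval_conj_negl. rewrite tval_conj. simpl.
  destruct (tval v (litf b0)); simpl; auto.
Qed.

Lemma conjL_in l x : In x l -> tautology (Imp (conjL l) x).
Proof. intros H v. simpl. rewrite tval_conjL.
  destruct (forallb (tval v) l) eqn:E; simpl; auto.
  rewrite forallb_forall in E. rewrite E; auto. Qed.
Lemma conj_lit l x : In x l -> tautology (Imp (conj l) (litf x)).
Proof. intros H v. simpl. rewrite tval_conj.
  destruct (forallb _ l) eqn:E; simpl; auto.
  rewrite forallb_forall in E. rewrite E; auto. Qed.
Lemma conj_sub l1 l2 : (forall x, In x l2 -> In x l1) -> tautology (Imp (conj l1) (conj l2)).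
Proof. intros H v. simpl. rewrite !tval_conj.
  destruct (forallb _ l1) eqn:E; simpl; auto.
  rewrite forallb_forall in E. apply forallb_forall. auto. Qed.

Lemma exists_filter (P : formula -> Prop) (l : list formula) :
  exists Y, forall D, In D Y <-> In D l /\ P D.
Proof.
  induction l as [|a l IH].
  - exists []. simpl. tauto.
  - destruct IH as [Y HY]. destruct (classic (P a)) as [Ha|Ha].
    + exists (a :: Y). intro D. simpl. rewrite HY. split.
      * intros [<-|H]; tauto.
      * intros [[<-|H] HP]; tauto.
    + exists Y. intro D. simpl. rewrite HY. split.
      * tauto.
      * intros [[<-|H] HP]; tauto.
Qed.

Arguments conj : simpl never.
Arguments disj : simpl never.
Arguments litf : simpl never.

Definition isBox (E : formula) : bool := match E with Box _ => true | _ => false end.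
Definition isCL (L : logic) : bool := match L with CL => true | _ => false end.

Lemma filter_lt {A} (f g : A -> bool) l :
  (forall x, In x l -> f x = true -> g x = true) ->
  (exists x, In x l /\ g x = true /\ f x = false) ->
  length (filter f l) < length (filter g l).
Proof.
  induction l as [|a l IH]; simpl; intros H1 [x [Hx [Hg Hf]]].
  - destruct Hx.
  - assert (Hle: forall l', (forall x, In x l' -> f x = true -> g x = true) -> length (filter f l') <= length (filter g l')).
    { induction l'; simpl; intros H; auto. destruct (f a0) eqn:E1.
      - rewrite (H a0 (or_introl eq_refl) E1). simpl. apply le_n_S. apply IHl'; auto.
      - destruct (g a0); simpl; [apply le_S|]; apply IHl'; auto. }
    destruct Hx as [->|Hx].
    + rewrite Hf, Hg. simpl. apply le_n_S. apply Hle. auto.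
    + destruct (f a) eqn:E1.
      * rewrite (H1 a (or_introl eq_refl) E1). simpl. apply le_n_S. apply IH; eauto.
      * destruct (g a); simpl; [apply le_S|]; apply IH; eauto.
Qed.
Section Compl.
Variable L : logic.
Notation Pv := (prov L).
Variable Phi : list formula.
Hypothesis HcImp : forall A B, In (Imp A B) Phi -> In A Phi /\ In B Phi.
Hypothesis HcOr : forall A B, In (Or A B) Phi -> In A Phi /\ In B Phi.
Hypothesis HcAnd : forall A B, In (And A B) Phi -> In A Phi /\ In B Phi.
Hypothesis HcRhd : forall A B, In (Rhd A B) Phi -> In A Phi /\ In B Phi.
Hypothesis HcBox : forall A, In (Box A) Phi -> In A Phi.

Definition allLits : list lit := list_prod Phi [true; false].
Definition Extra : list formula := map (fun l => Box (Neg (conj l))) (subseqs allLits).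
Definition Phip : list formula := nodup fdec (Phi ++ Extra).
Definition litS (Sl : list formula) (E : formula) : formula := if in_dec fdec E Sl then E else Neg E.
Definition theta (Sl : list formula) : formula := conjL (map (litS Sl) Phip).
Definition mem Sl E := Pv (Imp (theta Sl) E).
Definition Cons X := ~ Pv (Neg X).
Definition LabelOK Sl := In Sl (subseqs Phip) /\ Cons (theta Sl).
Definition Dec Sl E := mem Sl E \/ mem Sl (Neg E).

Lemma Phi_Phip E : In E Phi -> In E Phip.
Proof. intro H. unfold Phip. apply nodup_In. apply in_or_app; auto. Qed.
Lemma Extra_Phip l : In l (subseqs allLits) -> In (Box (Neg (conj l))) Phip.
Proof. intro H. unfold Phip. apply nodup_In. apply in_or_app; right. unfold Extra. apply in_map_iff. eauto. Qed.
Lemma label_sub Sl : LabelOK Sl -> incl Sl Phip.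
Proof. intros [H _]. apply subseqs_incl; auto. Qed.

Lemma mem_in Sl E : In E Phip -> In E Sl -> mem Sl E.
Proof. intros H1 H2. apply ax_taut. unfold theta.
  assert (Hx: In E (map (litS Sl) Phip)). { apply in_map_iff. exists E. split; auto. unfold litS. destruct (in_dec fdec E Sl); tauto. }
  exact (conjL_in _ _ Hx). Qed.
Lemma mem_notin Sl E : In E Phip -> ~ In E Sl -> mem Sl (Neg E).
Proof. intros H1 H2. apply ax_taut. unfold theta.
  assert (Hx: In (Neg E) (map (litS Sl) Phip)). { apply in_map_iff. exists E. split; auto. unfold litS. destruct (in_dec fdec E Sl); tauto. }
  exact (conjL_in _ _ Hx). Qed.
Lemma mem_both Sl E : Cons (theta Sl) -> mem Sl E -> mem Sl (Neg E) -> False.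
Proof. intros HC H1 H2. apply HC. refine (taut_mp2 _ _ _ _ H1 H2). taut_tac. Qed.
Lemma in_iff_mem Sl E : Cons (theta Sl) -> In E Phip -> (In E Sl <-> mem Sl E).
Proof. intros HC HE. split; [apply mem_in; auto|]. intro H. destruct (in_dec fdec E Sl); auto.
  exfalso. eapply mem_both; eauto. apply mem_notin; auto. Qed.
Lemma mem_taut Sl X Y : tautology (Imp X Y) -> mem Sl X -> mem Sl Y.
Proof. intros T H. exact (c_taut1 _ _ _ T H). Qed.
Lemma mem_taut2 Sl X Y Z : tautology (Imp X (Imp Y Z)) -> mem Sl X -> mem Sl Y -> mem Sl Z.
Proof. intros T H1 H2. exact (c_taut2 _ _ _ _ T H1 H2). Qed.

Lemma dec_phip Sl E : In E Phip -> Dec Sl E.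
Proof. intro H. unfold Dec. destruct (in_dec fdec E Sl); [left; apply mem_in| right; apply mem_notin]; auto. Qed.
Lemma dec_neg Sl E : Dec Sl E -> Dec Sl (Neg E).
Proof. intros [H|H]; [right|left]; auto. eapply mem_taut; [|exact H]. taut_tac. Qed.
Lemma dec_and Sl E F : Dec Sl E -> Dec Sl F -> Dec Sl (And E F).
Proof. intros [H1|H1] [H2|H2].
  - left. eapply mem_taut2; [|exact H1|exact H2]. taut_tac.
  - right. eapply mem_taut; [|exact H2]. taut_tac.
  - right. eapply mem_taut; [|exact H1]. taut_tac.
  - right. eapply mem_taut; [|exact H1]. taut_tac. Qed.
Lemma dec_conj Sl l : (forall x, In x l -> In (fst x) Phip) -> Dec Sl (conj l).
Proof.
  induction l as [|x l IH]; intro H.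
  - left. apply ax_taut. unfold conj. simpl. taut_tac.
  - unfold conj. simpl. fold (conj l). apply dec_and; [| apply IH; intros; apply H; simpl; auto].
    unfold litf. destruct x as [E b]. simpl. destruct b eqn:Hb; [|apply dec_neg]; apply dec_phip; apply (H (E, b)); simpl; rewrite ?Hb; auto.
Qed.

Lemma notpv_cons G X : ~ Pv (Imp G X) -> Cons (And G (Neg X)).
Proof. intros H1 H2. apply H1. refine (taut_mp1 _ _ _ H2). taut_tac. Qed.
Lemma cons_mono X Y : Pv (Imp X Y) -> Cons X -> Cons Y.
Proof. intros H1 H2 H3. apply H2. refine (taut_mp2 _ _ _ _ H1 H3). taut_tac. Qed.

Definition MD (g : formula) (x : formula) : formula := And g (Dia x).
Lemma MD_mono g X Y : Pv (Imp X Y) -> Pv (Imp (MD g X) (MD g Y)).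
Proof. intro H. assert (H1: Pv (Imp (Neg Y) (Neg X))) by (refine (taut_mp1 _ _ _ H); taut_tac).
  assert (H2 := box_mono _ _ H1). unfold MD, Dia. refine (taut_mp1 _ _ _ H2). taut_tac. Qed.
Lemma MD_split g phi E : Cons (MD g phi) -> Cons (MD g (And phi E)) \/ Cons (MD g (And phi (Neg E))).
Proof.
  intro HC. apply NNPP. intro Hn. apply not_or_and in Hn. destruct Hn as [H1 H2].
  unfold Cons in *. apply NNPP in H1. apply NNPP in H2. apply HC.
  assert (H3: Pv (Imp (Box (Neg (And phi E))) (Imp (Box (Neg (And phi (Neg E)))) (Box (Neg phi))))).
  { apply box_taut2. taut_tac. }
  unfold MD, Dia in *. refine (taut_mp3 _ _ _ _ _ H1 H2 H3). taut_tac.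
Qed.
Lemma MD_cons g X : Cons (MD g X) -> Cons X.
Proof. intros H1 H2. apply H1. assert (H3 := ax_nec _ H2). unfold MD, Dia. refine (taut_mp1 _ _ _ H3). taut_tac. Qed.

Lemma lind (M : formula -> formula)
  (Mmono : forall X Y, Pv (Imp X Y) -> Pv (Imp (M X) (M Y)))
  (Msplit : forall phi E, Cons (M phi) -> Cons (M (And phi E)) \/ Cons (M (And phi (Neg E)))) :
  forall L0 phi, NoDup L0 -> Cons (M phi) ->
  exists Sl, In Sl (subseqs L0) /\ Cons (M (And phi (conjL (map (litS Sl) L0)))).
Proof.
  induction L0 as [|E L1 IH]; intros phi HN HC.
  - exists []. split; [simpl; auto|]. simpl. refine (cons_mono _ _ (Mmono _ _ _) HC). apply ax_taut. taut_tac.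
  - inversion HN as [|? ? HE HN1]; subst.
    destruct (Msplit phi E HC) as [H|H].
    + destruct (IH _ HN1 H) as [S1 [HS1 HC1]]. exists (E :: S1). split; [apply subseqs_cons; auto|].
      assert (Heq: map (litS (E :: S1)) L1 = map (litS S1) L1).
      { apply map_ext_in. intros x Hx. unfold litS. destruct (in_dec fdec x (E :: S1)) as [h|h]; destruct (in_dec fdec x S1) as [h'|h']; auto.
        - destruct h as [->|h]; [contradiction| contradiction].
        - exfalso. apply h. right. auto. }
      simpl. rewrite Heq. unfold litS at 1. destruct (in_dec fdec E (E :: S1)) as [_|h]; [|exfalso; apply h; left; auto].
      refine (cons_mono _ _ (Mmono _ _ _) HC1). apply ax_taut. taut_tac.
    + destruct (IH _ HN1 H) as [S1 [HS1 HC1]]. exists S1. split; [apply subseqs_skip; auto|].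
      simpl. unfold litS at 1. destruct (in_dec fdec E S1) as [h|_].
      { exfalso. apply HE. apply (subseqs_incl _ _ HS1). auto. }
      refine (cons_mono _ _ (Mmono _ _ _) HC1). apply ax_taut. taut_tac.
Qed.

Lemma lind_modal g phi : Cons (MD g phi) -> exists Sl, In Sl (subseqs Phip) /\ Cons (MD g (And phi (theta Sl))).
Proof. intro H. apply (lind (MD g) (MD_mono g) (MD_split g) Phip phi (NoDup_nodup _ _) H). Qed.
Lemma lind_plain phi : Cons phi -> exists Sl, In Sl (subseqs Phip) /\ Cons (And phi (theta Sl)).
Proof.
  intro H. refine (lind (fun x => x) (fun X Y h => h) _ Phip phi (NoDup_nodup _ _) H).
  intros p E HC. apply NNPP. intro Hn. apply not_or_and in Hn. destruct Hn as [H1 H2].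
  unfold Cons in *. apply NNPP in H1. apply NNPP in H2. apply HC. refine (taut_mp2 _ _ _ _ H1 H2). taut_tac.
Qed.

Lemma transfer G T E : Cons (MD (theta G) (theta T)) -> mem G (Box E) -> Dec T E -> mem T E.
Proof.
  intros HC H1 [H2|H2]; auto. exfalso. apply HC.
  assert (H3 := ax_nec _ H2).
  assert (H4: Pv (Imp (Box (Imp (theta T) (Neg E))) (Imp (Box E) (Box (Neg (theta T)))))) by (apply box_taut2; taut_tac).
  unfold MD, Dia. unfold mem in H1. refine (taut_mp3 _ _ _ _ _ H1 H3 H4). taut_tac.
Qed.
Lemma transfer_box G T E : Cons (MD (theta G) (theta T)) -> mem G (Box E) -> Dec T (Box E) -> mem T (Box E).
Proof. intros HC H1 H2. apply (transfer G); auto. exact (c_mp _ _ _ (c_thm _ _ (ax_4 E)) H1). Qed.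


Lemma tval_shape1 v b0 Y :
  tval v (conj (b0 :: map negl Y)) = tval v (litf b0) && negb (tval v (disj Y)).
Proof.
  change (b0 :: map negl Y) with ([b0] ++ map negl Y).
  rewrite !tval_conj_app, !tval_conj_negl. rewrite tval_conj. simpl.
  destruct (tval v (litf b0)); simpl; auto.
Qed.

Definition canon (l : list lit) : list lit := filter (fun x => if in_dec ldec x l then true else false) allLits.

Lemma incons (X A : formula) : Pv (Imp X A) -> Pv (Imp X (Neg A)) -> ~ Cons X.
Proof. intros H1 H2 H3. apply H3. refine (taut_mp2 _ _ _ _ H1 H2). taut_tac. Qed.

Lemma lob_child G l : LabelOK G -> (forall x, In x l -> In x allLits) -> Cons (MD (theta G) (conj l)) ->
  exists T, LabelOK T /\ Cons (MD (theta G) (theta T)) /\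
    (exists E, In E T /\ ~ In E G /\ isBox E = true) /\
    (forall x, In x l -> if snd x then In (fst x) T else ~ In (fst x) T).
Proof.
  intros HG Hl HC.
  set (l' := canon l). set (psi := conj l').
  assert (Hl'sub: In l' (subseqs allLits)) by apply filter_subseqs.
  assert (HBox: In (Box (Neg psi)) Phip) by (apply Extra_Phip; auto).
  assert (Hin': forall x, In x l -> In x l').
  { intros x Hx. unfold l', canon. apply filter_In. split; auto. destruct (in_dec ldec x l); tauto. }
  assert (H1: Cons (MD (theta G) psi)).
  { refine (cons_mono _ _ (MD_mono _ _ _ _) HC). apply ax_taut. apply conj_sub.
    intros x Hx. unfold l', canon in Hx. apply filter_In in Hx. destruct Hx as [_ Hx]. destruct (in_dec ldec x l); auto; discriminate. }
  assert (H2: Cons (MD (theta G) (And psi (Box (Neg psi))))).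
  { refine (cons_mono _ _ _ H1). pose proof (@lob_dia L psi) as HL. unfold MD. refine (taut_mp1 _ _ _ HL). taut_tac. }
  destruct (lind_modal _ _ H2) as [Sl [HSl H3]].
  set (X := And (And psi (Box (Neg psi))) (theta Sl)) in *.
  assert (HX: Cons X) by (eapply MD_cons; eauto).
  assert (HT: Cons (theta Sl)) by (refine (cons_mono _ _ _ HX); apply ax_taut; unfold X; taut_tac).
  assert (HXpsi: Pv (Imp X psi)) by (apply ax_taut; unfold X; taut_tac).
  assert (HXth: forall E, mem Sl E -> Pv (Imp X E)).
  { intros E HE. unfold mem in HE. refine (taut_mp1 _ _ _ HE). unfold X. taut_tac. }
  exists Sl. split; [split; auto|]. split.
  { refine (cons_mono _ _ (MD_mono _ _ _ _) H3). apply ax_taut. taut_tac. }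
  split.
  - exists (Box (Neg psi)). split; [|split; [|reflexivity]].
    + apply (in_iff_mem _ _ HT HBox). apply NNPP. intro Hn.
      assert (Hm: mem Sl (Neg (Box (Neg psi)))).
      { apply mem_notin; auto. intro Hi. apply Hn. apply mem_in; auto. }
      apply (incons X (Box (Neg psi))); auto. apply ax_taut; unfold X; taut_tac.
    + intro Hi. assert (Hm: mem G (Box (Neg psi))) by (apply mem_in; auto).
      apply H1. unfold MD, Dia. unfold mem in Hm. refine (taut_mp1 _ _ _ Hm). taut_tac.
  - intros [E b] Hx. simpl.
    assert (HE: In E Phip) by (apply Phi_Phip; apply Hl in Hx; apply in_prod_iff in Hx; tauto).
    assert (Hlit: Pv (Imp X (litf (E, b)))).
    { refine (c_taut1 _ _ _ _ HXpsi). apply conj_lit. apply Hin'; auto. }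
    unfold litf in Hlit; simpl in Hlit.
    destruct b.
    + apply (in_iff_mem _ _ HT HE). apply NNPP. intro Hn.
      assert (Hm: mem Sl (Neg E)) by (apply mem_notin; auto; intro Hi; apply Hn; apply mem_in; auto).
      apply (incons X E); auto.
    + intro Hi. assert (Hm: mem Sl E) by (apply mem_in; auto).
      apply (incons X E); auto.
Qed.

Definition Step G T X :=
  LabelOK T /\ Cons (MD (theta G) (theta T)) /\
  (exists E, In E T /\ ~ In E G /\ isBox E = true) /\
  (forall D, In D Phi -> In D T -> Cons (And (theta G) (Neg (Rhd D (disj X))))) /\
  (isCL L = true -> forall D, In D X -> ~ In D T).

Lemma c_J3fold G Y chi : (forall D, In D Y -> Pv (Imp G (Rhd D chi))) -> Pv (Imp G (Rhd (disj Y) chi)).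
Proof.
  induction Y as [|a Y IH]; intro H.
  - change (disj []) with Bot. apply c_thm. apply bot_rhd.
  - change (disj (a :: Y)) with (Or a (disj Y)). apply c_J3; [apply H; left; auto| apply IH; intros; apply H; right; auto].
Qed.

Lemma cons_contra G X : Cons (MD G (conj X)) \/ Pv (Imp G (Box (Neg (conj X)))).
Proof.
  destruct (classic (Cons (MD G (conj X)))) as [H|H]; [left; auto| right].
  unfold Cons in H. apply NNPP in H. unfold MD, Dia in H. refine (taut_mp1 _ _ _ H). taut_tac.
Qed.

Lemma negl_allLits Y : incl Y Phi -> forall x, In x (map negl Y) -> In x allLits.
Proof. intros H x Hx. apply in_map_iff in Hx. destruct Hx as [D [<- HD]]. unfold negl, allLits. apply in_prod; auto. simpl; auto. Qed.

Lemma lit_allLits E b : In E Phi -> In (E, b) allLits.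
Proof. intro H. unfold allLits. apply in_prod; auto. destruct b; simpl; auto. Qed.

Lemma child_box G C : LabelOK G -> In (Box C) Phi -> ~ In (Box C) G -> exists T, Step G T [] /\ ~ In C T.
Proof.
  intros HG HB HnB.
  destruct (exists_filter (fun D => Pv (Imp (theta G) (Rhd D Bot))) Phi) as [Y HY].
  set (l := (C, false) :: map negl Y).
  assert (Hl: forall x, In x l -> In x allLits).
  { intros x [<-|Hx]; [apply lit_allLits; auto| apply (negl_allLits Y); auto]. intros D HD; apply HY in HD; tauto. }
  assert (HC: Cons (MD (theta G) (conj l))).
  { destruct (cons_contra (theta G) l) as [H|H]; auto. exfalso. apply HnB.
    assert (H1: Pv (Imp (theta G) (Box (Imp (Neg C) (disj Y))))).
    { refine (c_box_taut _ _ _ _ H). intro v. unfold l, Neg. cbn [tval]. rewrite tval_shape1. unfold litf; simpl.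
      destruct (tval v C), (tval v (disj Y)); reflexivity. }
    assert (H2: Pv (Imp (theta G) (Rhd (disj Y) Bot))) by (apply c_J3fold; intros D HD; apply HY in HD; tauto).
    apply c_J6b in H2.
    assert (H3: Pv (Imp (theta G) (Box C))) by (refine (c_box_taut2 _ _ _ _ _ H1 H2); taut_tac).
    apply (in_iff_mem _ _ (proj2 HG) (Phi_Phip _ HB)). exact H3. }
  destruct (lob_child G l HG Hl HC) as [T [HT [HMD [Hstr Hlits]]]].
  exists T. split; [|apply (Hlits (C, false)); left; auto].
  split; auto. split; auto. split; auto. split.
  - intros D HD HDT. apply notpv_cons. intro Hp. change (disj []) with Bot in Hp.
    assert (HDY: In D Y) by (apply HY; auto).
    apply (Hlits (negl D)); auto. right. apply in_map; auto.
  - intros _ D [].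
Qed.

Lemma child_neg G A B : LabelOK G -> In (Rhd A B) Phi -> ~ In (Rhd A B) G ->
  exists T, Step G T [B] /\ In A T /\ (isCL L = true -> ~ In B T).
Proof.
  intros HG HR HnR. destruct (HcRhd _ _ HR) as [HA HB].
  destruct (exists_filter (fun D => Pv (Imp (theta G) (Rhd D (disj [B])))) Phi) as [Y HY].
  set (Xa := if isCL L then [B] else []).
  set (l := (A, true) :: map negl Xa ++ map negl Y).
  assert (Hl: forall x, In x l -> In x allLits).
  { intros x [<-|Hx]; [apply lit_allLits; auto|]. apply in_app_or in Hx. destruct Hx as [Hx|Hx].
    - apply (negl_allLits Xa); auto. unfold Xa. destruct (isCL L); intros D HD; [destruct HD as [<-|[]]; auto| destruct HD].
    - apply (negl_allLits Y); auto. intros D HD; apply HY in HD; tauto. }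
  assert (HC: Cons (MD (theta G) (conj l))).
  { destruct (cons_contra (theta G) l) as [H|H]; auto. exfalso. apply HnR.
    assert (H1: Pv (Imp (theta G) (Box (Imp A (Or (disj Y) (disj Xa)))))).
    { refine (c_box_taut _ _ _ _ H). intro v. unfold l, Neg. cbn [tval]. rewrite tval_shape. unfold litf; simpl.
      destruct (tval v A), (tval v (disj Y)), (tval v (disj Xa)); reflexivity. }
    assert (H2: Pv (Imp (theta G) (Rhd (disj Y) (disj [B])))) by (apply c_J3fold; intros D HD; apply HY in HD; tauto).
    assert (H2': Pv (Imp (theta G) (Rhd (disj Y) B))).
    { refine (c_R1 _ _ _ _ _ H2). apply ax_taut. change (disj [B]) with (Or B Bot). taut_tac. }
    assert (H3: Pv (Imp (theta G) (Rhd (disj Xa) B))).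
    { unfold Xa. destruct (isCL L) eqn:HL.
      - change (disj [B]) with (Or B Bot). apply c_J3; apply c_thm; [|apply bot_rhd].
        apply cl_refl. destruct L; simpl in HL; congruence.
      - change (disj []) with Bot. apply c_thm, bot_rhd. }
    assert (H4 := c_J3 _ _ _ _ H2' H3).
    assert (H5 := c_boxante _ _ _ _ H1 H4).
    apply (in_iff_mem _ _ (proj2 HG) (Phi_Phip _ HR)). exact H5. }
  destruct (lob_child G l HG Hl HC) as [T [HT [HMD [Hstr Hlits]]]].
  exists T. split; [|split; [apply (Hlits (A, true)); left; auto|]].
  - split; auto. split; auto. split; auto. split.
    + intros D HD HDT. apply notpv_cons. intro Hp.
      assert (HDY: In D Y) by (apply HY; auto).
      apply (Hlits (negl D)); auto. right. apply in_or_app; right. apply in_map; auto.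
    + intros HL D [<-|[]]. apply (Hlits (negl B)). right. apply in_or_app; left. unfold Xa. rewrite HL. left; auto.
  - intros HL. apply (Hlits (negl B)). right. apply in_or_app; left. unfold Xa. rewrite HL. left; auto.
Qed.

Lemma child_sib G A B X : LabelOK G -> In (Rhd A B) Phi -> In (Rhd A B) G -> In X (subseqs Phi) ->
  Cons (And (theta G) (Neg (Rhd A (disj X)))) ->
  exists T, Step G T X /\ In B T /\ (forall D, In D X -> ~ In D T).
Proof.
  intros HG HR HinR HX HCX. destruct (HcRhd _ _ HR) as [HA HB].
  destruct (exists_filter (fun D => Pv (Imp (theta G) (Rhd D (disj X)))) Phi) as [Y HY].
  set (l := (B, true) :: map negl X ++ map negl Y).
  assert (Hl: forall x, In x l -> In x allLits).
  { intros x [<-|Hx]; [apply lit_allLits; auto|]. apply in_app_or in Hx. destruct Hx as [Hx|Hx].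
    - apply (negl_allLits X); auto. apply subseqs_incl; auto.
    - apply (negl_allLits Y); auto. intros D HD; apply HY in HD; tauto. }
  assert (HC: Cons (MD (theta G) (conj l))).
  { destruct (cons_contra (theta G) l) as [H|H]; auto. exfalso. apply HCX.
    assert (H1: Pv (Imp (theta G) (Box (Imp B (Or (disj Y) (disj X)))))).
    { refine (c_box_taut _ _ _ _ H). intro v. unfold l, Neg. cbn [tval]. rewrite tval_shape. unfold litf; simpl.
      destruct (tval v B), (tval v (disj Y)), (tval v (disj X)); reflexivity. }
    assert (H0: Pv (Imp (theta G) (Rhd A B))) by (apply mem_in; auto; apply Phi_Phip; auto).
    assert (H2 := c_boxmono _ _ _ _ H0 H1).
    assert (H3: Pv (Imp (theta G) (Rhd (disj Y) (disj X)))) by (apply c_J3fold; intros D HD; apply HY in HD; tauto).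
    assert (H4 := c_J2p _ _ _ _ H2 H3).
    refine (taut_mp1 _ _ _ H4). taut_tac. }
  destruct (lob_child G l HG Hl HC) as [T [HT [HMD [Hstr Hlits]]]].
  assert (Hav: forall D, In D X -> ~ In D T).
  { intros D HD. apply (Hlits (negl D)). right. apply in_or_app; left. apply in_map; auto. }
  exists T. split; [|split; [apply (Hlits (B, true)); left; auto| auto]].
  split; auto. split; auto. split; auto. split; auto.
  intros D HD HDT. apply notpv_cons. intro Hp.
  assert (HDY: In D Y) by (apply HY; auto).
  apply (Hlits (negl D)); auto. right. apply in_or_app; right. apply in_map; auto.
Qed.
Definition node := (list formula * list formula)%type.
Fixpoint valid (p : list node) : Prop :=
  match p with
  | [] => False
  | n :: p' => In (snd n) (subseqs Phi) /\
      match p' with [] => LabelOK (fst n) | m :: _ => Step (fst m) (fst n) (snd n) /\ valid p' end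
  end.
Definition lab (p : list node) : list formula := match p with n :: _ => fst n | [] => [] end.

Lemma valid_lab p : valid p -> LabelOK (lab p).
Proof. destruct p as [|n [|m p]]; simpl; try tauto. intros [_ [[H _] _]]. exact H. Qed.
Lemma valid_cons p T X : valid p -> Step (lab p) T X -> In X (subseqs Phi) -> valid ((T, X) :: p).
Proof. destruct p as [|m p]; simpl; tauto. Qed.
Lemma valid_tail n p : valid (n :: p) -> p <> [] -> valid p.
Proof. destruct p; simpl; tauto. Qed.
Lemma valid_step n p : valid (n :: p) -> p <> [] -> Step (lab p) (fst n) (snd n).
Proof. destruct p; simpl; tauto. Qed.
Lemma valid_tagok n p : valid (n :: p) -> In (snd n) (subseqs Phi).
Proof. simpl; tauto. Qed.
Lemma valid_app e p : valid (e ++ p) -> p <> [] -> valid p.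
Proof. induction e as [|a e IH]; simpl; intros H Hp; auto. apply IH; auto. eapply valid_tail; eauto.
  destruct e, p; simpl; congruence. Qed.
Lemma app_nonnil {A} (e p : list A) : p <> [] -> e ++ p <> [].
Proof. destruct e, p; simpl; congruence. Qed.

Lemma step_box_in G T X E : LabelOK G -> Step G T X -> In (Box E) G -> In (Box E) T.
Proof.
  intros HG [HT [HMD _]] HB.
  assert (HBp: In (Box E) Phip) by (apply (label_sub G HG); auto).
  apply (in_iff_mem _ _ (proj2 HT) HBp). apply (transfer_box G); auto.
  apply mem_in; auto. apply dec_phip; auto.
Qed.
Lemma step_box G T X E : LabelOK G -> Step G T X -> In (Box E) G -> Dec T E -> mem T E.
Proof.
  intros HG HS HB HD. destruct HS as [HT [HMD _]].
  assert (HBp: In (Box E) Phip) by (apply (label_sub G HG); auto).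
  apply (transfer G); auto. apply mem_in; auto.
Qed.

Lemma prop_box E : (forall Sl, Dec Sl E) -> forall e p, valid (e ++ p) -> p <> [] -> In (Box E) (lab p) ->
  In (Box E) (lab (e ++ p)) /\ (e <> [] -> mem (lab (e ++ p)) E).
Proof.
  intros HD. induction e as [|a e IH]; intros p Hv Hp HB.
  - simpl. split; auto. intros []; auto.
  - simpl in Hv |- *. assert (Hne: e ++ p <> []) by (apply app_nonnil; auto).
    assert (Hv': valid (e ++ p)) by (eapply valid_tail; eauto).
    assert (Hst := valid_step _ _ Hv Hne).
    destruct (IH p Hv' Hp HB) as [H1 _].
    assert (HG := valid_lab _ Hv').
    split; [eapply step_box_in; eauto|]. intros _. eapply step_box; eauto.
Qed.

Definition msr Sl := length (filter (fun E => isBox E && (if in_dec fdec E Sl then true else false)) Phip).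
Lemma step_msr G T X : LabelOK G -> Step G T X -> msr G < msr T.
Proof.
  intros HG HS. unfold msr. apply filter_lt.
  - intros x Hx Hf. apply andb_prop in Hf. destruct Hf as [Hb Hi].
    destruct (in_dec fdec x G) as [Hi'|]; [|discriminate].
    destruct x; try discriminate.
    simpl. destruct (in_dec fdec (Box x) T) as [|n]; auto.
    exfalso; apply n; eapply step_box_in; eauto.
  - destruct HS as [HT [_ [[E [HE1 [HE2 HE3]]] _]]]. exists E. split; [apply (label_sub T HT); auto|].
    rewrite HE3. simpl. destruct (in_dec fdec E T); [|contradiction]. destruct (in_dec fdec E G); [contradiction|]. auto.
Qed.
Lemma filter_len_le {A} (f : A -> bool) l : length (filter f l) <= length l.
Proof. induction l; simpl; auto. destruct (f a); simpl; lia. Qed.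
Lemma valid_len p : valid p -> length p <= msr (lab p) + 1.
Proof.
  induction p as [|n p IH]; simpl; [tauto|]. destruct p as [|m p].
  - intros _. simpl. lia.
  - intros [_ [Hst Hv]]. specialize (IH Hv). change (lab (m :: p)) with (fst m) in IH.
    assert (Hm := step_msr _ _ _ (valid_lab _ Hv) Hst). change (lab (m :: p)) with (fst m) in Hm.
    change (length (n :: m :: p)) with (Datatypes.S (length (m :: p))). change (lab (n :: m :: p)) with (fst n). lia.
Qed.
Lemma valid_len_max p : valid p -> length p <= length Phip + 1.
Proof. intro H. pose proof (valid_len p H). pose proof (filter_len_le (fun E => isBox E && (if in_dec fdec E (lab p) then true else false)) Phip). unfold msr in *. lia. Qed.

Definition Rp (p q : list node) : Prop := exists e, e <> [] /\ q = e ++ p.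
Definition Sp (q r : list node) : Prop :=
  (match q, r with
   | nq :: pq, nr :: pr =>
       (pr = pq /\ incl (snd nq) (snd nr) /\ (forall D, In D (snd nr) -> ~ In D (fst nr))) \/
       (exists e, e <> [] /\ pq = e ++ pr)
   | _, _ => False end) \/ (isCL L = true /\ q = r).

Definition Wt := {p : list node | valid p}.
Definition Fm : frame := Frame Wt (fun x y => Rp (proj1_sig x) (proj1_sig y)) (fun x y => Sp (proj1_sig x) (proj1_sig y)).
Definition Vm : nat -> W Fm -> Prop := fun n x => In (Var n) (lab (proj1_sig x)).

Lemma Rp_trans : forall x y z : W Fm, R Fm x y -> R Fm y z -> R Fm x z.
Proof.
  intros [x hx] [y hy] [z hz]; simpl. intros [e1 [H1 ->]] [e2 [H2 ->]].
  exists (e2 ++ e1). split; [destruct e2; simpl; congruence| rewrite app_assoc; auto].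
Qed.
Lemma Rp_len p q : Rp p q -> length p < length q.
Proof. intros [e [He ->]]. rewrite length_app. destruct e; [congruence|simpl]. lia. Qed.
Lemma Rp_wf : well_founded (fun x y : W Fm => R Fm y x).
Proof.
  apply (Wf_nat.well_founded_lt_compat _ (fun x : W Fm => length Phip + 1 - length (proj1_sig x))).
  intros [x hx] [y hy]; simpl. intro H. apply Rp_len in H.
  pose proof (valid_len_max x hx). lia.
Qed.
Lemma Sp_trans : forall x y z : W Fm, S Fm x y -> S Fm y z -> S Fm x z.
Proof.
  intros [q hq] [r hr] [s hs]; simpl. unfold Sp.
  intros [H1|[HL1 <-]] [H2|[HL2 <-]]; auto.
  left. destruct q as [|nq pq]; [destruct H1|]. destruct r as [|nr pr]; [destruct H1|]. destruct s as [|ns ps]; [destruct H2|].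
  destruct H1 as [[-> [Hi1 _]]|[e1 [He1 ->]]]; destruct H2 as [[-> [Hi2 Hd2]]|[e2 [He2 ->]]].
  - left. split; auto. split; auto. intros x Hx; auto.
  - right. exists e2; auto.
  - right. exists e1; auto.
  - right. exists (e1 ++ e2). split; [destruct e1; simpl; congruence| rewrite app_assoc; auto].
Qed.

Lemma in_imp Sl A B : Cons (theta Sl) -> In A Phip -> In B Phip -> In (Imp A B) Phip ->
  (In (Imp A B) Sl <-> (In A Sl -> In B Sl)).
Proof.
  intros HC HA HB HI. rewrite !(in_iff_mem Sl _ HC) by auto. split.
  - intros H1 H2. eapply mem_taut2; [|exact H1|exact H2]. taut_tac.
  - intro H. destruct (dec_phip Sl A HA) as [H1|H1].
    + eapply mem_taut; [|exact (H H1)]. taut_tac.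
    + eapply mem_taut; [|exact H1]. taut_tac.
Qed.
Lemma in_or Sl A B : Cons (theta Sl) -> In A Phip -> In B Phip -> In (Or A B) Phip ->
  (In (Or A B) Sl <-> (In A Sl \/ In B Sl)).
Proof.
  intros HC HA HB HI. rewrite !(in_iff_mem Sl _ HC) by auto. split.
  - intro H. destruct (dec_phip Sl A HA) as [H1|H1]; auto. destruct (dec_phip Sl B HB) as [H2|H2]; auto.
    exfalso. apply HC. refine (taut_mp3 _ _ _ _ _ H H1 H2). taut_tac.
  - intros [H|H]; eapply mem_taut; try exact H; taut_tac.
Qed.
Lemma in_and Sl A B : Cons (theta Sl) -> In A Phip -> In B Phip -> In (And A B) Phip ->
  (In (And A B) Sl <-> (In A Sl /\ In B Sl)).
Proof.
  intros HC HA HB HI. rewrite !(in_iff_mem Sl _ HC) by auto. split.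
  - intro H. split; eapply mem_taut; try exact H; taut_tac.
  - intros [H1 H2]. eapply mem_taut2; [|exact H1|exact H2]. taut_tac.
Qed.
Lemma taut_contra X Y : tautology (Imp X Y) -> tautology (Imp (Neg Y) (Neg X)).
Proof. intros T v. specialize (T v). simpl in *. destruct (tval v X), (tval v Y); auto. Qed.

Lemma valid_nonnil p : valid p -> p <> [].
Proof. destruct p; simpl; tauto || congruence. Qed.

Lemma truth : forall E, In E Phi -> forall w : W Fm, forces Fm Vm w E <-> In E (lab (proj1_sig w)).
Proof.
  induction E as [n| | |A IHA B IHB|A IHA B IHB|A IHA B IHB|C IHC|A IHA B IHB]; intros HE [p Hp];
    pose proof (valid_lab p Hp) as HG; pose proof (proj2 HG) as HC; simpl.
  - unfold Vm. simpl. tauto.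
  - split; auto. intros _. apply (in_iff_mem _ _ HC (Phi_Phip _ HE)). apply ax_taut; taut_tac.
  - split; [intros []|]. intro H. apply (in_iff_mem _ _ HC (Phi_Phip _ HE)) in H. exfalso. apply HC. exact H.
  - destruct (HcImp _ _ HE) as [HA HB].
    specialize (IHA HA (exist _ p Hp)). specialize (IHB HB (exist _ p Hp)). simpl in IHA, IHB.
    rewrite (in_imp _ _ _ HC (Phi_Phip _ HA) (Phi_Phip _ HB) (Phi_Phip _ HE)). tauto.
  - destruct (HcOr _ _ HE) as [HA HB].
    specialize (IHA HA (exist _ p Hp)). specialize (IHB HB (exist _ p Hp)). simpl in IHA, IHB.
    rewrite (in_or _ _ _ HC (Phi_Phip _ HA) (Phi_Phip _ HB) (Phi_Phip _ HE)). tauto.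
  - destruct (HcAnd _ _ HE) as [HA HB].
    specialize (IHA HA (exist _ p Hp)). specialize (IHB HB (exist _ p Hp)). simpl in IHA, IHB.
    rewrite (in_and _ _ _ HC (Phi_Phip _ HA) (Phi_Phip _ HB) (Phi_Phip _ HE)). tauto.
  - assert (HCp := HcBox _ HE). split.
    + intro Hf. apply NNPP. intro Hn. destruct (child_box _ _ HG HE Hn) as [T [HSt HCT]].
      assert (Hv': valid ((T, []) :: p)) by (apply valid_cons; auto; apply subseqs_nil).
      assert (HR: Rp p ((T, []) :: p)) by (exists [(T, [])]; split; [congruence| reflexivity]).
      specialize (Hf (exist _ _ Hv') HR). apply (IHC HCp (exist _ _ Hv')) in Hf. simpl in Hf. contradiction.
    + intros HI [q Hq] HR. simpl in HR. destruct HR as [e [He ->]].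
      apply (IHC HCp (exist _ _ Hq)). simpl.
      destruct (prop_box C (fun Sl => dec_phip Sl C (Phi_Phip _ HCp)) e p Hq (valid_nonnil p Hp) HI) as [_ Hm].
      apply (in_iff_mem _ _ (proj2 (valid_lab _ Hq)) (Phi_Phip _ HCp)). auto.
  - destruct (HcRhd _ _ HE) as [HA HB]. split.
    + intro Hf. apply NNPP. intro Hn. destruct (child_neg _ _ _ HG HE Hn) as [T [HSt [HAT HBT]]].
      assert (Hv': valid ((T, [B]) :: p)) by (apply valid_cons; auto; apply subseqs_single; auto).
      assert (HR: Rp p ((T, [B]) :: p)) by (exists [(T, [B])]; split; [congruence| reflexivity]).
      assert (HqA: forces Fm Vm (exist _ _ Hv') A) by (apply (IHA HA); simpl; auto).
      destruct (Hf (exist _ _ Hv') HR HqA) as [[z Hz] [HRz [HSz HzB]]]. simpl in HRz, HSz.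
      apply (IHB HB (exist _ z Hz)) in HzB. simpl in HzB.
      destruct HRz as [e [He ->]]. destruct e as [|nz e']; [congruence|].
      unfold Sp in HSz. simpl in HSz, HzB.
      destruct HSz as [[[Hpar [Hinc Hdis]]|[e2 [He2 Heq]]]|[HL Heq]].
      * apply (Hdis B (Hinc B (or_introl eq_refl))). exact HzB.
      * apply (f_equal (@length _)) in Heq. rewrite !length_app in Heq. destruct e2; [congruence|simpl in Heq; lia].
      * injection Heq as Heq1 _. subst nz. simpl in HzB. exact (HBT HL HzB).
    + intros HI [y Hy] HRy HyA. simpl in HRy. apply (IHA HA (exist _ y Hy)) in HyA. simpl in HyA.
      destruct HRy as [e [He ->]]. destruct e as [|ny e']; [congruence|]. simpl in HyA.
      assert (Hp0 := valid_nonnil p Hp).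
      destruct e' as [|n2 e''].
      * simpl in Hy. assert (Hst := valid_step ny p Hy Hp0).
        destruct Hst as [_ [_ [_ [HI4 _]]]]. assert (HCX := HI4 A HA HyA).
        assert (Htag := valid_tagok ny p Hy).
        destruct (child_sib _ _ _ _ HG HE HI Htag HCX) as [T [HSt [HBT Hav]]].
        assert (Hv': valid ((T, snd ny) :: p)) by (apply valid_cons; auto).
        exists (exist _ _ Hv'). simpl. split; [exists [(T, snd ny)]; split; [congruence|reflexivity]|]. split.
        -- unfold Sp. left. left. split; [reflexivity| split; [apply incl_refl| exact Hav]].
        -- apply (IHB HB (exist _ _ Hv')). simpl. auto.
      * assert (HCX: Cons (And (theta (lab p)) (Neg (Rhd A (disj []))))).
        { apply notpv_cons. intro Hbox. change (disj []) with Bot in Hbox. apply c_J6b in Hbox.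
          set (lA := canon [(A, true)]). set (psiA := conj lA).
          assert (HlA: In lA (subseqs allLits)) by apply filter_subseqs.
          assert (HinA: In (A, true) lA).
          { unfold lA, canon. apply filter_In. split; [apply lit_allLits; auto|]. destruct (in_dec ldec (A, true) [(A, true)]) as [|n]; auto. exfalso; apply n; left; auto. }
          assert (T1: tautology (Imp psiA A)) by (exact (conj_lit lA (A, true) HinA)).
          assert (T2: tautology (Imp A psiA)).
          { intro v. pose proof (conj_sub [(A, true)] lA) as T3.
            assert (T4: tautology (Imp (conj [(A, true)]) psiA)).
            { apply T3. intros x Hx. unfold lA, canon in Hx. apply filter_In in Hx. destruct Hx as [_ Hx].
              destruct (in_dec ldec x [(A, true)]); auto; discriminate. }
            specialize (T4 v). simpl in T4 |- *. unfold conj in T4. simpl in T4. unfold litf in T4. simpl in T4.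
            destruct (tval v A), (tval v psiA); simpl in *; auto. }
          assert (HBx: In (Box (Neg psiA)) Phip) by (apply Extra_Phip; auto).
          assert (Hm1: In (Box (Neg psiA)) (lab p)).
          { apply (in_iff_mem _ _ HC HBx). refine (c_box_taut _ _ _ _ Hbox). apply taut_contra; auto. }
          assert (HD: forall Sl, Dec Sl (Neg psiA)).
          { intro Sl. apply dec_neg. apply dec_conj. intros x Hx. apply Phi_Phip.
            apply (subseqs_incl _ _ HlA) in Hx. unfold allLits in Hx. destruct x as [x1 x2]. apply in_prod_iff in Hx. simpl; tauto. }
          destruct (prop_box (Neg psiA) HD (ny :: n2 :: e'') p Hy Hp0 Hm1) as [_ Hm2].
          specialize (Hm2 ltac:(congruence)). simpl in Hm2.
          assert (Hv2 := valid_lab _ Hy). simpl in Hv2.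
          apply (mem_both (fst ny) psiA (proj2 Hv2)); auto.
          apply (mem_taut _ A); auto. apply mem_in; auto. apply Phi_Phip; auto. }
        destruct (child_sib _ _ _ _ HG HE HI (subseqs_nil _) HCX) as [T [HSt [HBT _]]].
        assert (Hv': valid ((T, []) :: p)) by (apply valid_cons; auto; apply subseqs_nil).
        exists (exist _ _ Hv'). simpl. split; [exists [(T, [])]; split; [congruence|reflexivity]|]. split.
        -- unfold Sp. left. right. exists (n2 :: e''). split; [congruence| reflexivity].
        -- apply (IHB HB (exist _ _ Hv')). simpl. auto.
Qed.
Definition nodes : list node := list_prod (subseqs Phip) (subseqs Phi).
Fixpoint upto (n : nat) : list (list node) :=
  match n with 0 => [[]] | Datatypes.S k => [] :: concat (map (fun x => map (cons x) (upto k)) nodes) end.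
Lemma upto_in n p : (forall x, In x p -> In x nodes) -> length p <= n -> In p (upto n).
Proof.
  revert p; induction n as [|k IH]; intros p H1 H2.
  - destruct p; simpl in *; [auto| lia].
  - destruct p as [|x p]; simpl; [auto|]. right. apply in_concat. exists (map (cons x) (upto k)). split.
    + apply in_map_iff. exists x. split; auto. apply H1; left; auto.
    + apply in_map. apply IH; [intros; apply H1; right; auto| simpl in H2; lia].
Qed.
Lemma valid_nodes p : valid p -> forall x, In x p -> In x nodes.
Proof.
  induction p as [|n p IH]; intros Hv x Hx; [destruct Hx|].
  destruct Hx as [<-|Hx].
  - unfold nodes. destruct n as [T X]. apply in_prod.
    + apply (proj1 (valid_lab _ Hv)).
    + apply (valid_tagok _ _ Hv).
  - apply IH; auto. eapply valid_tail; eauto. intro; subst; destruct Hx.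
Qed.
Lemma fin_Fm : finite_frame Fm.
Proof.
  assert (Hb: forall cs : list (list node), exists l : list Wt, forall w : Wt, In (proj1_sig w) cs -> In w l).
  { induction cs as [|c cs IHc].
    - exists []. intros w [].
    - destruct IHc as [l Hl]. destruct (classic (valid c)) as [Hc|Hc].
      + exists (exist _ c Hc :: l). intros [x hx] [Hx|Hx]; simpl in Hx.
        * subst. left. f_equal. apply proof_irrelevance.
        * right. apply (Hl (exist _ x hx)). auto.
      + exists l. intros [x hx] [Hx|Hx]; simpl in Hx.
        * subst. contradiction.
        * apply (Hl (exist _ x hx)). auto. }
  destruct (Hb (upto (length Phip + 1))) as [l Hl]. exists l. intro w. apply Hl.
  destruct w as [x hx]. simpl. apply upto_in; [apply valid_nodes; auto| apply valid_len_max; auto].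
Qed.
Lemma Lframe_Fm : inhabited Wt -> L_frame L Fm.
Proof.
  intro Hi. split; [split; [exact Hi| split; [exact Rp_trans| exact Rp_wf]]|].
  destruct L eqn:HL.
  - exact Sp_trans.
  - split; [|exact Sp_trans]. intro x. simpl. unfold Sp. right. rewrite HL. auto.
Qed.

End Compl.

Fixpoint sub (A : formula) : list formula :=
  A :: match A with
       | Imp B C | Or B C | And B C | Rhd B C => sub B ++ sub C
       | Box B => sub B
       | _ => []
       end.
Lemma sub_self A : In A (sub A).
Proof. destruct A; simpl; auto. Qed.
Lemma sub_closed A E : In E (sub A) -> incl (sub E) (sub A).
Proof.
  induction A; simpl; intros [<-|H]; try (apply incl_refl); try destruct H;
  try (apply in_app_or in H; destruct H as [H|H]);
  try (intros x Hx; right; apply in_or_app; first [left; apply IHA1; auto; fail| right; apply IHA2; auto]);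
  try (intros x Hx; right; apply IHA; auto).
Qed.

Lemma completeness L A : ~ prov L A -> exists F, L_frame L F /\ finite_frame F /\ ~ valid_in F A.
Proof.
  intro HnA. set (Phi := sub A).
  assert (Hc2: forall E B C, (E = Imp B C \/ E = Or B C \/ E = And B C \/ E = Rhd B C) -> In E Phi -> In B Phi /\ In C Phi).
  { intros E B C HE H. pose proof (sub_closed _ _ H) as Hi.
    destruct HE as [ -> | [ -> | [ -> | -> ]]]; simpl in Hi; split; apply Hi; right; apply in_or_app;
      first [left; apply sub_self | right; apply sub_self]. }
  assert (HcImp: forall B C, In (Imp B C) Phi -> In B Phi /\ In C Phi) by (intros B C H; eapply Hc2; [|exact H]; tauto).
  assert (HcOr: forall B C, In (Or B C) Phi -> In B Phi /\ In C Phi) by (intros B C H; eapply Hc2; [|exact H]; tauto).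
  assert (HcAnd: forall B C, In (And B C) Phi -> In B Phi /\ In C Phi) by (intros B C H; eapply Hc2; [|exact H]; tauto).
  assert (HcRhd: forall B C, In (Rhd B C) Phi -> In B Phi /\ In C Phi) by (intros B C H; eapply Hc2; [|exact H]; tauto).
  assert (HcBox: forall B, In (Box B) Phi -> In B Phi).
  { intros B H. pose proof (sub_closed _ _ H) as Hi. simpl in Hi. apply Hi. right. apply sub_self. }
  assert (HCA: Cons L (Neg A)).
  { intro H. apply HnA. refine (taut_mp1 _ _ _ H). taut_tac. }
  destruct (lind_plain L Phi _ HCA) as [Sl [HSl HCS]].
  assert (HLS: LabelOK L Phi Sl).
  { split; auto. refine (cons_mono L _ _ _ HCS). apply ax_taut. taut_tac. }
  assert (HAp: In A (Phip Phi)) by (apply Phi_Phip; apply sub_self).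
  assert (HnAS: ~ In A Sl).
  { intro H. apply (in_iff_mem L Phi _ _ (proj2 HLS) HAp) in H. apply HCS. unfold mem in H.
    refine (taut_mp1 _ _ _ H). taut_tac. }
  assert (Hroot: valid L Phi [(Sl, [])]) by (simpl; split; [apply subseqs_nil| exact HLS]).
  exists (Fm L Phi). split; [apply Lframe_Fm; constructor; exact (exist _ _ Hroot)|]. split; [apply fin_Fm|].
  intro Hv. specialize (Hv (Vm L Phi) (exist _ _ Hroot)).
  apply (truth L Phi HcImp HcOr HcAnd HcRhd HcBox A (sub_self A)) in Hv. simpl in Hv. contradiction.
Qed.

Theorem theorem3p2 : forall (L : logic) (A : formula),
  (prov L A <-> (forall F : frame, L_frame L F -> valid_in F A)) /\
  ((forall F : frame, L_frame L F -> valid_in F A) <->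
   (forall F : frame, L_frame L F -> finite_frame F -> valid_in F A)).
Proof.
  intros L A.
  assert (Hfin: (forall F : frame, L_frame L F -> finite_frame F -> valid_in F A) -> prov L A).
  { intro H. apply NNPP. intro Hn. destruct (completeness L A Hn) as [F [H1 [H2 H3]]]. apply H3. apply H; auto. }
  split; split.
  - intros HP F HF. apply (soundness L A HP F HF).
  - intro H. apply Hfin. intros F HF _. apply H; auto.
  - intros H F HF _. apply H; auto.
  - intro H. intros F HF. apply (soundness L A (Hfin H) F HF).
Qed.
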